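(* Let $S$ be a finite set of more than $6$ points in the plane in general position with distinct $x$-coordinates. Let $L$, $R$, $T$ be respectively the leftmost, rightmost and topmost points of $S$. Let $p\in S$, and let $r\in S\setminus\{p\}$ (the clockwise neighbor of $p$) be the point minimizing the clockwise angle from the upward vertical ray at $p$ to the ray $\overrightarrow{pr}$, and $q\in S\setminus\{p\}$ (the counterclockwise neighbor of $p$) the point minimizing the counterclockwise angle from the upward vertical ray at $p$ to the ray $\overrightarrow{pq}$. If either of the point sequences $[L,q,p,r,T,R]$ or $[T,q,p,r,R,L]$ is a convex chain, then $p$ is a vertex of the upper hull of $S$.
   Context: A sequence of points is a convex chain if every three consecutive points of the sequence make a right (clockwise) turn. The upper hull of $S$ is the part of the boundary of the convex hull of $S$ lying on or above the segment from the leftmost to the rightmost point. *)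

(* Defs.v *)
From Stdlib Require Import Reals Lra List.
Open Scope R_scope.

Definition point := (R * R)%type.
Definition px (a : point) : R := fst a.
Definition py (a : point) : R := snd a.

(* Orientation determinant: > 0 left (counterclockwise) turn, < 0 right
   (clockwise) turn, = 0 collinear. *)
Definition orient (a b c : point) : R :=
  (px b - px a) * (py c - py a) - (py b - py a) * (px c - px a).

Definition right_turn (a b c : point) : Prop := orient a b c < 0.

Fixpoint convex_chain (l : list point) : Prop :=
  match l with
  | a :: ((b :: c :: _) as t) => right_turn a b c /\ convex_chain t
  | _ => True
  end.

Definition general_position (S : list point) : Prop :=
  forall a b c, In a S -> In b S -> In c S ->
    a <> b -> b <> c -> a <> c -> orient a b c <> 0.

Definition distinct_x (S : list point) : Prop :=
  forall a b, In a S -> In b S -> a <> b -> px a <> px b.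

(* Angles measured from the upward vertical direction (0,1), in [0, 2*PI),
   of the nonzero vector v = (a,b). acos (b/|v|) is the unsigned angle
   between v and (0,1). Clockwise from up passes through (1,0). *)
Definition vnorm (a b : R) : R := sqrt (a * a + b * b).

Definition cw_angle (a b : R) : R :=
  if Rle_dec 0 a then acos (b / vnorm a b) else 2 * PI - acos (b / vnorm a b).

Definition ccw_angle (a b : R) : R :=
  if Rle_dec a 0 then acos (b / vnorm a b) else 2 * PI - acos (b / vnorm a b).

Definition cw_angle_at (p r : point) : R := cw_angle (px r - px p) (py r - py p).
Definition ccw_angle_at (p q : point) : R := ccw_angle (px q - px p) (py q - py p).

Definition convex_comb (ws : list (R * point)) (p : point) : Prop :=
  (forall w x, In (w, x) ws -> 0 <= w) /\
  fold_right (fun wx acc => fst wx + acc) 0 ws = 1 /\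
  fold_right (fun wx acc => fst wx * px (snd wx) + acc) 0 ws = px p /\
  fold_right (fun wx acc => fst wx * py (snd wx) + acc) 0 ws = py p.

Definition hull_vertex (S : list point) (p : point) : Prop :=
  In p S /\
  ~ exists ws : list (R * point),
      (forall w x, In (w, x) ws -> In x S /\ x <> p) /\ convex_comb ws p.

(* Vertex of the upper hull: a hull vertex lying on or above the segment
   from the leftmost point L to the rightmost point R. *)
Definition upper_hull_vertex (S : list point) (L Rt p : point) : Prop :=
  hull_vertex S p /\ orient L Rt p >= 0.

(* Main.v *)
Require Import Defs.
From Stdlib Require Import Reals List Lra Psatz.
Open Scope R_scope.

Definition cr (a1 b1 a2 b2 : R) := a1*b2 - b1*a2.
Definition hR (a b : R) := 0 < a \/ (a = 0 /\ 0 < b).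
Definition hL (a b : R) := a < 0 \/ (a = 0 /\ b < 0).
Definition cwle a1 b1 a2 b2 :=
  (hR a1 b1 /\ hL a2 b2) \/ (hR a1 b1 /\ hR a2 b2 /\ cr a1 b1 a2 b2 <= 0)
  \/ (hL a1 b1 /\ hL a2 b2 /\ cr a1 b1 a2 b2 <= 0).

Lemma unit_ineq a1 c1 a2 c2 : 0 <= a1 -> 0 <= a2 -> a1*a1+c1*c1 = 1 ->
  a2*a2+c2*c2 = 1 -> c2 <= c1 -> a1*c2 <= c1*a2.
Proof.
  intros.
  destruct (Rle_dec 0 c2); destruct (Rle_dec 0 c1).
  - assert (a1 <= a2) by nra. nra.
  - lra.
  - nra.
  - assert (a2 <= a1) by nra. nra.
Qed.

Record nf (a b : R) := { nn : R; npos : 0 < nn; nsq : nn*nn = a*a+b*b;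
   neq : vnorm a b = nn }.

Lemma get_nf a b : ~ (a = 0 /\ b = 0) -> nf a b.
Proof.
  intros H. refine {| nn := vnorm a b |}; auto.
  - unfold vnorm. apply sqrt_lt_R0.
    destruct (Req_dec a 0); destruct (Req_dec b 0); try tauto; nra.
  - unfold vnorm. rewrite sqrt_sqrt; nra.
Qed.

Lemma c_bound a b n : 0 < n -> n*n = a*a+b*b -> -1 <= b/n <= 1.
Proof.
  intros. assert (Hb: b*b <= n*n) by nra.
  assert (-n <= b <= n) by nra.
  split; [apply (Rmult_le_reg_r n)|apply (Rmult_le_reg_r n)]; auto;
  unfold Rdiv; rewrite Rmult_assoc, Rinv_l by lra; lra.
Qed.

Lemma cw_R a b : hR a b -> cw_angle a b = acos (b / vnorm a b).
Proof. intros H; unfold cw_angle; destruct (Rle_dec 0 a); auto.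
  exfalso; destruct H; lra. Qed.

Lemma acos_m1 : acos (-1) = PI.
Proof. replace (-1) with (- (1)) by ring. rewrite acos_opp, acos_1; lra. Qed.

Lemma cw_L a b : hL a b -> cw_angle a b = 2*PI - acos (b / vnorm a b).
Proof. intros H; unfold cw_angle; destruct (Rle_dec 0 a); auto.
  destruct H as [H|[H1 H2]]; [lra|]. subst a.
  assert (E: b / vnorm 0 b = -1).
  { unfold vnorm. replace (0*0+b*b) with ((-b)*(-b)) by ring.
    rewrite sqrt_square by lra. field. lra. }
  rewrite E, acos_m1. lra. Qed.

Lemma acos_le c1 c2 : -1 <= c1 <= 1 -> -1 <= c2 <= 1 -> acos c1 <= acos c2 -> c2 <= c1.
Proof.
  intros H1 H2 H. rewrite <- (cos_acos c1), <- (cos_acos c2) by auto.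
  pose proof (acos_bound c1); pose proof (acos_bound c2).
  apply cos_decr_1; lra.
Qed.

Lemma cr_unit a1 b1 a2 b2 n1 n2 : 0 < n1 -> 0 < n2 ->
  cr a1 b1 a2 b2 = n1*n2*((a1/n1)*(b2/n2) - (b1/n1)*(a2/n2)).
Proof. intros; unfold cr; field; lra. Qed.

Lemma unit_sq a b n : 0 < n -> n*n = a*a+b*b -> (a/n)*(a/n)+(b/n)*(b/n) = 1.
Proof. intros. replace ((a/n)*(a/n)+(b/n)*(b/n)) with ((a*a+b*b)/(n*n)) by (field; lra).
  rewrite <- H0. field. lra. Qed.

Lemma sgn_div a n : 0 < n -> (0 <= a -> 0 <= a/n) /\ (a <= 0 -> a/n <= 0).
Proof. intros; split; intros; unfold Rdiv.
  apply Rmult_le_pos; auto; left; apply Rinv_0_lt_compat; auto.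
  assert (0 < /n) by (apply Rinv_0_lt_compat; auto). nra. Qed.

Lemma halves a b : ~ (a = 0 /\ b = 0) -> hR a b \/ hL a b.
Proof. unfold hR, hL; intros. destruct (Rtotal_order a 0) as [|[|]];
  destruct (Rtotal_order b 0) as [|[|]]; try tauto; lra. Qed.

Lemma cwR_lt a b : hR a b -> cw_angle a b < PI.
Proof.
  intros H. rewrite cw_R by auto.
  destruct H as [H|[H1 H2]].
  - assert (Hn: ~ (a = 0 /\ b = 0)) by lra. destruct (get_nf _ _ Hn) as [n Hp Hs He].
    rewrite He. pose proof (unit_sq _ _ _ Hp Hs).
    assert (0 < a/n) by (unfold Rdiv; apply Rmult_lt_0_compat; auto; apply Rinv_0_lt_compat; auto).
    assert (-1 < b/n < 1) by nra.
    pose proof (acos_bound_lt _ H2). lra.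
  - subst a. assert (E: b / vnorm 0 b = 1).
    { unfold vnorm. replace (0*0+b*b) with (b*b) by ring.
      rewrite sqrt_square by lra. field. lra. }
    rewrite E, acos_1. pose proof PI_RGT_0; lra.
Qed.

Lemma cwL_ge a b : hL a b -> PI <= cw_angle a b.
Proof. intros H. rewrite cw_L by auto. pose proof (acos_bound (b / vnorm a b)). lra. Qed.

Lemma cw_le a1 b1 a2 b2 : ~ (a1 = 0 /\ b1 = 0) -> ~ (a2 = 0 /\ b2 = 0) ->
  cw_angle a1 b1 <= cw_angle a2 b2 -> cwle a1 b1 a2 b2.
Proof.
  intros N1 N2 H. unfold cwle.
  destruct (get_nf _ _ N1) as [n1 P1 S1 E1]. destruct (get_nf _ _ N2) as [n2 P2 S2 E2].
  pose proof (c_bound _ _ _ P1 S1) as B1. pose proof (c_bound _ _ _ P2 S2) as B2.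
  pose proof (unit_sq _ _ _ P1 S1) as U1. pose proof (unit_sq _ _ _ P2 S2) as U2.
  pose proof (sgn_div a1 _ P1) as G1. pose proof (sgn_div a2 _ P2) as G2.
  assert (0 < n1*n2) by nra.
  rewrite (cr_unit a1 b1 a2 b2 n1 n2) by auto.
  destruct (halves _ _ N1) as [R1|L1]; destruct (halves _ _ N2) as [R2|L2]; try tauto.
  - right; left. split; [auto|split; auto].
    rewrite cw_R, cw_R, E1, E2 in H by auto. apply acos_le in H; auto.
    assert (X1: 0 <= a1/n1) by (destruct R1; apply G1; lra).
    assert (X2: 0 <= a2/n2) by (destruct R2; apply G2; lra).
    pose proof (unit_ineq _ _ _ _ X1 X2 U1 U2 H). nra.
  - exfalso. pose proof (cwR_lt _ _ R2). pose proof (cwL_ge _ _ L1). lra.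
  - right; right. split; [auto|split; auto].
    rewrite cw_L, cw_L, E1, E2 in H by auto.
    assert (Y: acos (b2/n2) <= acos (b1/n1)) by lra.
    apply acos_le in Y; auto.
    assert (X1: a1/n1 <= 0) by (destruct L1; apply G1; lra).
    assert (X2: a2/n2 <= 0) by (destruct L2; apply G2; lra).
    assert (Z1: 0 <= -(a1/n1)) by lra. assert (Z2: 0 <= -(a2/n2)) by lra.
    assert (Hu1: (-(a1/n1))*(-(a1/n1)) + (b1/n1)*(b1/n1) = 1) by lra.
    assert (Hu2: (-(a2/n2))*(-(a2/n2)) + (b2/n2)*(b2/n2) = 1) by lra.
    pose proof (unit_ineq _ _ _ _ Z2 Z1 Hu2 Hu1 Y). nra.
Qed.

Lemma core u1 u2 v1 v2 x1 x2 :
  ~ (x1 = 0 /\ x2 = 0) ->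
  cr u1 u2 v1 v2 > 0 -> cwle v1 v2 x1 x2 -> cwle (-u1) u2 (-x1) x2 ->
  cr v1 v2 x1 x2 <= 0.
Proof.
  intros N H0 H1 H2. unfold cwle in H1, H2.
  assert (I1: cr u1 u2 v1 v2 * x1 + cr v1 v2 x1 x2 * u1 - cr u1 u2 x1 x2 * v1 = 0)
    by (unfold cr; ring).
  assert (I2: cr u1 u2 v1 v2 * x2 + cr v1 v2 x1 x2 * u2 - cr u1 u2 x1 x2 * v2 = 0)
    by (unfold cr; ring).
  assert (J: cr (-u1) u2 (-x1) x2 = - cr u1 u2 x1 x2) by (unfold cr; ring).
  rewrite J in H2.
  destruct (Rle_dec (cr v1 v2 x1 x2) 0); auto. exfalso.
  remember (cr u1 u2 v1 v2) as c1 eqn:E1. remember (cr u1 u2 x1 x2) as c2 eqn:E2.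
  remember (cr v1 v2 x1 x2) as c3 eqn:E3. unfold cr in E1, E2, E3. clear J.
  unfold hR, hL in *.
  intuition (subst; nra).
Qed.

Lemma upc u1 u2 v1 v2 :
  ~ (u1 = 0 /\ u2 = 0) -> ~ (v1 = 0 /\ v2 = 0) ->
  cr u1 u2 v1 v2 > 0 -> cwle v1 v2 u1 u2 -> cwle (-u1) u2 (-v1) v2 ->
  u1 < 0 \/ 0 < v1.
Proof.
  intros Nu Nv H0 H1 H2. unfold cwle, hR, hL, cr in *.
  destruct (Rlt_dec u1 0); auto. destruct (Rlt_dec 0 v1); auto. exfalso.
  intuition; subst; nra.
Qed.

Lemma ccw_cw a b : ccw_angle a b = cw_angle (-a) b.
Proof.
  unfold ccw_angle, cw_angle.
  assert (E: vnorm (-a) b = vnorm a b) by (unfold vnorm; f_equal; ring).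
  rewrite E. destruct (Rle_dec a 0); destruct (Rle_dec 0 (-a)); auto; lra.
Qed.

Definition point_eq_dec (a b : point) : {a = b} + {a <> b}.
Proof. decide equality; apply Req_EM_T. Defined.

Lemma pt_nz (s p : point) : s <> p -> ~ (px s - px p = 0 /\ py s - py p = 0).
Proof. destruct s as [s1 s2], p as [p1 p2]; unfold px, py; simpl.
  intros H [H1 H2]. apply H. f_equal; lra. Qed.

Lemma sum_lin (A B x0 y0 : R) (ws : list (R * point)) :
  fold_right (fun wx acc => fst wx * (A*(px (snd wx) - x0) + B*(py (snd wx) - y0)) + acc) 0 ws
  = A * (fold_right (fun wx acc => fst wx * px (snd wx) + acc) 0 ws
         - x0 * fold_right (fun wx acc => fst wx + acc) 0 ws)
  + B * (fold_right (fun wx acc => fst wx * py (snd wx) + acc) 0 ws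
         - y0 * fold_right (fun wx acc => fst wx + acc) 0 ws).
Proof. induction ws as [|[w x] t IH]; simpl; [ring|]. rewrite IH; ring. Qed.

Lemma pos_zero (g : point -> R) (ws : list (R * point)) :
  (forall w x, In (w, x) ws -> 0 <= w /\ 0 < g x) ->
  fold_right (fun wx acc => fst wx * g (snd wx) + acc) 0 ws = 0 ->
  fold_right (fun wx acc => fst wx + acc) 0 ws = 0.
Proof.
  induction ws as [|[w x] t IH]; simpl; intros H E; auto.
  assert (Hw := H w x (or_introl eq_refl)).
  assert (Ht: forall w x, In (w, x) t -> 0 <= w /\ 0 < g x) by (intros; apply H; auto).
  assert (Hnn: forall l : list (R*point), (forall w x, In (w, x) l -> 0 <= w /\ 0 < g x) ->
     0 <= fold_right (fun wx acc => fst wx * g (snd wx) + acc) 0 l).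
  { induction l as [|[w' x'] l' IHl]; simpl; intros; [lra|].
    assert (K := H0 w' x' (or_introl eq_refl)).
    assert (0 <= fold_right (fun wx acc => fst wx * g (snd wx) + acc) 0 l')
      by (apply IHl; intros; apply H0; auto). nra. }
  pose proof (Hnn t Ht).
  assert (w * g x = 0) by nra. assert (w = 0) by nra.
  rewrite IH; auto; lra.
Qed.

Theorem lemma2 (S : list point) (L Rt T p q r : point) :
  NoDup S -> (length S > 6)%nat ->
  general_position S -> distinct_x S ->
  In L S -> (forall s, In s S -> px L <= px s) ->
  In Rt S -> (forall s, In s S -> px s <= px Rt) ->
  In T S -> (forall s, In s S -> py s <= py T) ->
  In p S ->
  In r S -> r <> p -> (forall s, In s S -> s <> p -> cw_angle_at p r <= cw_angle_at p s) ->
  In q S -> q <> p -> (forall s, In s S -> s <> p -> ccw_angle_at p q <= ccw_angle_at p s) ->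
  (convex_chain (L :: q :: p :: r :: T :: Rt :: nil) \/
   convex_chain (T :: q :: p :: r :: Rt :: L :: nil)) ->
  upper_hull_vertex S L Rt p.
Proof.
  intros _ _ GP DX HL HLm HR HRm _ _ Hp Hr Hrp Hrm Hq Hqp Hqm Hch.
  set (u1 := px q - px p). set (u2 := py q - py p).
  set (v1 := px r - px p). set (v2 := py r - py p).
  assert (H0 : cr u1 u2 v1 v2 > 0).
  { assert (orient q p r < 0) by (destruct Hch as [[_ [H _]]|[_ [H _]]]; exact H).
    unfold orient in H. unfold cr, u1, u2, v1, v2. nra. }
  assert (Hcw : forall s, In s S -> s <> p -> cwle v1 v2 (px s - px p) (py s - py p)).
  { intros s Hs Hsp. apply cw_le; [apply pt_nz; auto|apply pt_nz; auto|].
    apply (Hrm s Hs Hsp). }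
  assert (Hccw : forall s, In s S -> s <> p -> cwle (-u1) u2 (-(px s - px p)) (py s - py p)).
  { intros s Hs Hsp. apply cw_le.
    - intros [H1 H2]. apply (pt_nz q p Hqp). unfold u1, u2 in *; lra.
    - intros [H1 H2]. apply (pt_nz s p Hsp). lra.
    - pose proof (Hqm s Hs Hsp) as K. unfold ccw_angle_at in K.
      rewrite !ccw_cw in K. exact K. }
  assert (C2 : forall s, In s S -> s <> p ->
     cr v1 v2 (px s - px p) (py s - py p) <= 0 /\ 0 <= cr u1 u2 (px s - px p) (py s - py p)).
  { intros s Hs Hsp. split.
    - apply (core u1 u2); auto. apply pt_nz; auto.
    - assert (K: cr (-u1) u2 (-(px s - px p)) (py s - py p) <= 0).
      { apply (core (-v1) v2).
        - intros [H1 H2]. apply (pt_nz s p Hsp). lra.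
        - unfold cr in *; lra.
        - apply Hccw; auto.
        - rewrite !Ropp_involutive. apply Hcw; auto. }
      unfold cr in *; lra. }
  assert (C1 : u1 < 0 \/ 0 < v1).
  { apply upc with u2 v2; auto.
    - intros [H1 H2]. apply (pt_nz q p Hqp). unfold u1, u2 in *; lra.
    - intros [H1 H2]. apply (pt_nz r p Hrp). unfold v1, v2 in *; lra.
    - apply (Hcw q Hq Hqp).
    - apply (Hccw r Hr Hrp). }
  assert (F : forall s, In s S -> s <> p ->
     0 < (v2 - u2) * (px s - px p) + (u1 - v1) * (py s - py p)).
  { intros s Hs Hsp. destruct (C2 s Hs Hsp) as [K1 K2].
    destruct (Req_dec (cr u1 u2 (px s - px p) (py s - py p)) 0) as [E|E].
    - destruct (point_eq_dec s q) as [->|Hsq].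
      + unfold cr, u1, u2, v1, v2 in *. lra.
      + exfalso. apply (GP p q s Hp Hq Hs); auto;
        unfold orient; unfold cr, u1, u2 in E; lra.
    - unfold cr in *; lra. }
  split.
  - split; auto. intros [ws [Hws [W0 [W1 [WX WY]]]]].
    assert (Z := sum_lin (v2 - u2) (u1 - v1) (px p) (py p) ws).
    rewrite W1, WX, WY in Z.
    assert (Z2: fold_right (fun wx acc => fst wx * ((v2 - u2) * (px (snd wx) - px p)
        + (u1 - v1) * (py (snd wx) - py p)) + acc) 0 ws = 0) by (rewrite Z; ring).
    pose proof (pos_zero (fun x => (v2 - u2) * (px x - px p) + (u1 - v1) * (py x - py p))
       ws) as PZ. simpl in PZ.
    rewrite PZ in W1; [lra| |exact Z2].
    intros w x Hin. destruct (Hws w x Hin). split; [apply (W0 w x Hin)|apply F; auto].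
  - destruct (point_eq_dec L p) as [->|HLp].
    { assert (orient p Rt p = 0) by (unfold orient; ring). lra. }
    destruct (point_eq_dec Rt p) as [->|HRp].
    { assert (orient L p p = 0) by (unfold orient; ring). lra. }
    assert (a1n : px L - px p < 0).
    { pose proof (HLm p Hp). pose proof (DX L p HL Hp HLp). lra. }
    assert (b1p : 0 < px Rt - px p).
    { pose proof (HRm p Hp). pose proof (DX Rt p HR Hp HRp). lra. }
    destruct (C2 L HL HLp) as [A1 A2]. destruct (C2 Rt HR HRp) as [B1 B2].
    assert (EO : orient L Rt p = cr (px L - px p) (py L - py p) (px Rt - px p) (py Rt - py p))
      by (unfold orient, cr; ring).
    rewrite EO. apply Rle_ge.
    destruct (Rle_dec 0 (cr (px L - px p) (py L - py p) (px Rt - px p) (py Rt - py p))) as [G|G];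
      [exact G|exfalso].
    revert A1 A2 B1 B2 G C1 a1n b1p.
    generalize (px L - px p) (py L - py p) (px Rt - px p) (py Rt - py p).
    intros a1 a2 b1 b2. unfold cr. clearbody u1 u2 v1 v2. intros.
    assert (I1: (b1 * (u1*a2 - u2*a1) - a1 * (u1*b2 - u2*b1)) = - u1 * (a1*b2 - a2*b1)) by ring.
    assert (I2: (b1 * (v1*a2 - v2*a1) - a1 * (v1*b2 - v2*b1)) = - v1 * (a1*b2 - a2*b1)) by ring.
    destruct C1; nra.
Qed.
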